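(* Let $Y=(Y_{ij})$ be a $3\times 3$ real symmetric positive definite matrix which is Minkowski-reduced. Then for all $n\in\mathbb{R}^3$ we have ${}^t n\, Y\, n \ \ge\ \frac{1}{100}\,Y_{11}\,{}^t n\, n$.
   Context: A real symmetric positive definite $g\times g$ matrix $Y$ is Minkowski-reduced if (a) for all $j=1,\dots,g$ and all $v=(v_1,\dots,v_g)\in\mathbb{Z}^g$ with $\gcd(v_j,\dots,v_g)=1$ one has ${}^t v Y v\ge Y_{jj}$, and (b) for all $j=1,\dots,g-1$ one has $Y_{j,j+1}\ge 0$. *)

(* Defs.v *)
From Stdlib Require Import Reals ZArith List.
Open Scope R_scope.

(* A 3x3 real matrix is a function nat -> nat -> R; only indices 0,1,2 matter
   (0-indexed: paper's Y_{11} is Y 0 0). Vectors of R^3 are nat -> R. *)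

Definition qform3 (Y : nat -> nat -> R) (x : nat -> R) : R :=
  sum_f_R0 (fun i => sum_f_R0 (fun j => x i * Y i j * x j) 2) 2.

Definition sqnorm3 (x : nat -> R) : R := sum_f_R0 (fun i => x i * x i) 2.

Definition symmetric3 (Y : nat -> nat -> R) : Prop :=
  forall i j : nat, (i < 3)%nat -> (j < 3)%nat -> Y i j = Y j i.

Definition posdef3 (Y : nat -> nat -> R) : Prop :=
  forall x : nat -> R, (exists i, (i < 3)%nat /\ x i <> 0) -> qform3 Y x > 0.

Definition gcd_from (g : nat) (v : nat -> Z) (j : nat) : Z :=
  fold_right Z.gcd 0%Z (map v (seq j (g - j))).

Definition minkowski_reduced3 (Y : nat -> nat -> R) : Prop :=
  (forall (j : nat) (v : nat -> Z), (j < 3)%nat -> gcd_from 3 v j = 1%Z ->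
       qform3 Y (fun i => IZR (v i)) >= Y j j)
  /\ (forall j : nat, (j < 2)%nat -> Y j (S j) >= 0).

(* Main.v *)
Require Import Defs.
From Stdlib Require Import Reals ZArith List Lra Lia Psatz.
Open Scope R_scope.
Ltac sq t := let H := fresh in pose proof (Rle_0_sqr t) as H; unfold Rsqr in H.

Lemma P0 (X Y Z : R) : X*X+Y*Y+2*(Z*Z)-X*Y-X*Z-Y*Z - (X*X+Y*Y+Z*Z)/100 >= 0.
Proof. sq (X - 50/99*Y - 50/99*Z); sq (Y - 50/49*Z); sq Z; lra. Qed.
Lemma PB2 (X Y Z : R) : 2*(X*X)+Y*Y+Z*Z-X*Y-X*Z-Y*Z - (X*X+Y*Y+Z*Z)/100 >= 0.
Proof. sq (X - 50/199*Y - 50/199*Z); sq (Y - 12450/17201*Z); sq Z; lra. Qed.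
Lemma PB3 (X Y Z : R) : X*X+2*(Y*Y)+Z*Z-X*Y-X*Z-Y*Z - (X*X+Y*Y+Z*Z)/100 >= 0.
Proof. sq (X - 50/99*Y - 50/99*Z); sq (Y - 7450/17201*Z); sq Z; lra. Qed.
Lemma PA1 (X Y Z : R) : X*X - X*Z + Z*Z/2 + Y*Y - Y*Z + Z*Z/2 - (X*X+Y*Y+Z*Z)/100 >= 0.
Proof. sq (X - 50/99*Z); sq (Y - 50/99*Z); sq Z; lra. Qed.
Lemma PA2 (X Y Z : R) : X*X-X*Y+Y*Y/2 + Y*Y/2-Y*Z+Z*Z - (X*X+Y*Y+Z*Z)/100 >= 0.
Proof. sq (X - 50/99*Y); sq (Y - 4950/7301*Z); sq Z; lra. Qed.
Lemma PA3 (X Y Z : R) : X*X+Y*Y+Z*Z-X*Y-X*Z - (X*X+Y*Y+Z*Z)/100 >= 0.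
Proof. sq (X - 50/99*Y - 50/99*Z); sq (Y - 2500/7301*Z); sq Z; lra. Qed.

Lemma mulnn a t : 0 <= a -> t >= 0 -> a * t >= 0.
Proof. intros; nra. Qed.

Lemma coreA1 a b c E F X Y Z : 0 < a -> a <= b -> b <= c -> 0 <= E -> 2*E <= a ->
  0 <= F -> 2*F <= b -> 0 <= X -> 0 <= Y -> 0 <= Z ->
  a*(X*X)+b*(Y*Y)+c*(Z*Z) - 2*E*X*Z - 2*F*Y*Z >= /100 * a * (X*X+Y*Y+Z*Z).
Proof.
  intros. pose proof (mulnn a _ ltac:(lra) (PA1 X Y Z)).
  assert (0 <= (a-2*E)*(X*Z)) by (apply Rmult_le_pos; nra).
  assert (0 <= (b-2*F)*(Y*Z)) by (apply Rmult_le_pos; nra).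
  assert (0 <= (c-b)*(Z*Z)) by (apply Rmult_le_pos; nra).
  assert (0 <= (b-a)*(Z*Z)) by (apply Rmult_le_pos; nra).
  assert (0 <= (b-a)*(Y*Y-Y*Z+Z*Z/2)) by (apply Rmult_le_pos; nra).
  nra.
Qed.

Lemma coreA2 a b c D F X Y Z : 0 < a -> a <= b -> b <= c -> 0 <= D -> 2*D <= a ->
  0 <= F -> 2*F <= b -> 0 <= X -> 0 <= Y -> 0 <= Z ->
  a*(X*X)+b*(Y*Y)+c*(Z*Z) - 2*D*X*Y - 2*F*Y*Z >= /100 * a * (X*X+Y*Y+Z*Z).
Proof.
  intros. pose proof (mulnn a _ ltac:(lra) (PA2 X Y Z)).
  assert (0 <= (a-2*D)*(X*Y)) by (apply Rmult_le_pos; nra).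
  assert (0 <= (b-2*F)*(Y*Z)) by (apply Rmult_le_pos; nra).
  assert (0 <= (c-b)*(Z*Z)) by (apply Rmult_le_pos; nra).
  assert (0 <= (b-a)*(Y*Y)) by (apply Rmult_le_pos; nra).
  assert (0 <= (b-a)*(Y*Y/2-Y*Z+Z*Z)) by (apply Rmult_le_pos; nra).
  nra.
Qed.

Lemma coreA3 a b c D E X Y Z : 0 < a -> a <= b -> b <= c -> 0 <= D -> 2*D <= a ->
  0 <= E -> 2*E <= a -> 0 <= X -> 0 <= Y -> 0 <= Z ->
  a*(X*X)+b*(Y*Y)+c*(Z*Z) - 2*D*X*Y - 2*E*X*Z >= /100 * a * (X*X+Y*Y+Z*Z).
Proof.
  intros. pose proof (mulnn a _ ltac:(lra) (PA3 X Y Z)).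
  assert (0 <= (a-2*D)*(X*Y)) by (apply Rmult_le_pos; nra).
  assert (0 <= (a-2*E)*(X*Z)) by (apply Rmult_le_pos; nra).
  assert (0 <= (c-a)*(Z*Z)) by (apply Rmult_le_pos; nra).
  assert (0 <= (b-a)*(Y*Y)) by (apply Rmult_le_pos; nra).
  nra.
Qed.

Lemma coreB a b c D E F X Y Z : 0 < a -> a <= b -> b <= c -> 0 <= D -> 2*D <= a ->
  0 <= E -> 2*E <= a -> 0 <= F -> 2*F <= b -> 2*(D+E+F) <= a+b ->
  0 <= X -> 0 <= Y -> 0 <= Z ->
  a*(X*X)+b*(Y*Y)+c*(Z*Z) - 2*D*X*Y - 2*E*X*Z - 2*F*Y*Z >= /100 * a * (X*X+Y*Y+Z*Z).
Proof.
  intros.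
  destruct (Rle_dec Z X), (Rle_dec Z Y), (Rle_dec X Y).
  all: first
   [ (assert (Z <= X /\ Z <= Y) as [? ?] by lra;
      assert (0 <= X*Y - Z*Z) by nra; assert (0 <= X*Z - Z*Z) by nra; assert (0 <= Y*Z - Z*Z) by nra;
      pose proof (mulnn a _ ltac:(lra) (P0 X Y Z));
      assert (0 <= (a-2*D)*(X*Y-Z*Z)) by (apply Rmult_le_pos; nra);
      assert (0 <= (a-2*E)*(X*Z-Z*Z)) by (apply Rmult_le_pos; nra);
      assert (0 <= (b-2*F)*(Y*Z-Z*Z)) by (apply Rmult_le_pos; nra);
      assert (0 <= (a+b-2*(D+E+F))*(Z*Z)) by (apply Rmult_le_pos; nra);
      assert (0 <= (c-b)*(Z*Z)) by (apply Rmult_le_pos; nra);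
      assert (0 <= (b-a)*(Y*Y-Y*Z+Z*Z)) by (apply Rmult_le_pos; nra);
      nra)
   | (assert (X <= Z /\ X <= Y) as [? ?] by lra;
      assert (0 <= X*Y - X*X) by nra; assert (0 <= X*Z - X*X) by nra; assert (0 <= Y*Z - X*X) by nra;
      pose proof (mulnn a _ ltac:(lra) (PB2 X Y Z));
      assert (0 <= (a-2*D)*(X*Y-X*X)) by (apply Rmult_le_pos; nra);
      assert (0 <= (a-2*E)*(X*Z-X*X)) by (apply Rmult_le_pos; nra);
      assert (0 <= (b-2*F)*(Y*Z-X*X)) by (apply Rmult_le_pos; nra);
      assert (0 <= (a+b-2*(D+E+F))*(X*X)) by (apply Rmult_le_pos; nra);
      assert (0 <= (c-b)*(Z*Z)) by (apply Rmult_le_pos; nra);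
      assert (0 <= (b-a)*(Y*Y-Y*Z+Z*Z)) by (apply Rmult_le_pos; nra);
      nra)
   | (assert (Y <= Z /\ Y <= X) as [? ?] by lra;
      assert (0 <= X*Y - Y*Y) by nra; assert (0 <= X*Z - Y*Y) by nra; assert (0 <= Y*Z - Y*Y) by nra;
      pose proof (mulnn a _ ltac:(lra) (PB3 X Y Z));
      assert (0 <= (a-2*D)*(X*Y-Y*Y)) by (apply Rmult_le_pos; nra);
      assert (0 <= (a-2*E)*(X*Z-Y*Y)) by (apply Rmult_le_pos; nra);
      assert (0 <= (b-2*F)*(Y*Z-Y*Y)) by (apply Rmult_le_pos; nra);
      assert (0 <= (a+b-2*(D+E+F))*(Y*Y)) by (apply Rmult_le_pos; nra);
      assert (0 <= (c-b)*(Z*Z)) by (apply Rmult_le_pos; nra);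
      assert (0 <= (b-a)*(Y*Y-Y*Z+Z*Z)) by (apply Rmult_le_pos; nra);
      nra) ].
Qed.

Definition vec3 (p q r : Z) : nat -> Z :=
  fun i => match i with 0%nat => p | 1%nat => q | 2%nat => r | _ => 0%Z end.

Lemma absprod u v : u * v >= - (Rabs u * Rabs v).
Proof. rewrite <- Rabs_mult. pose proof (Rle_abs (-(u*v))). rewrite Rabs_Ropp in H. lra. Qed.

Theorem lemma2p2 (Y : nat -> nat -> R) :
  symmetric3 Y -> posdef3 Y -> minkowski_reduced3 Y ->
  forall n : nat -> R, qform3 Y n >= / 100 * Y 0%nat 0%nat * sqnorm3 n.
Proof.
  intros Hs Hp [Hm Hm2] n.
  assert (Ha : Y 0%nat 0%nat > 0).
  { pose proof (Hp (fun i => match i with 0%nat => 1 | _ => 0 end)) as H.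
    unfold qform3 in H; cbn [sum_f_R0] in H; cbv beta iota in H. apply Rlt_gt.
    assert (1 <> 0) by lra.
    assert (Hex : exists i, (i < 3)%nat /\ (fun i : nat => match i with 0%nat => 1 | _ => 0 end) i <> 0) by (exists 0%nat; split; [lia | assumption]). specialize (H Hex). lra. }
  pose proof (Hs 1%nat 0%nat ltac:(lia) ltac:(lia)) as S10.
  pose proof (Hs 2%nat 0%nat ltac:(lia) ltac:(lia)) as S20.
  pose proof (Hs 2%nat 1%nat ltac:(lia) ltac:(lia)) as S21.
  pose proof (Hm2 0%nat ltac:(lia)) as Hd.
  pose proof (Hm2 1%nat ltac:(lia)) as Hf.
  pose proof (Hm 0%nat (vec3 0 1 0) ltac:(lia) eq_refl) as V1.
  pose proof (Hm 1%nat (vec3 0 0 1) ltac:(lia) eq_refl) as V2.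
  pose proof (Hm 1%nat (vec3 1 (-1) 0) ltac:(lia) eq_refl) as V3.
  pose proof (Hm 2%nat (vec3 1 0 1) ltac:(lia) eq_refl) as V4.
  pose proof (Hm 2%nat (vec3 1 0 (-1)) ltac:(lia) eq_refl) as V5.
  pose proof (Hm 2%nat (vec3 0 (-1) 1) ltac:(lia) eq_refl) as V6.
  pose proof (Hm 2%nat (vec3 1 (-1) 1) ltac:(lia) eq_refl) as V7.
  unfold qform3, vec3 in *; cbn [sum_f_R0] in *; cbv beta iota in *.
  unfold sqnorm3; cbn [sum_f_R0].
  rewrite S10, S20, S21 in *.
  set (a := Y 0%nat 0%nat) in *. set (b := Y 1%nat 1%nat) in *. set (c := Y 2%nat 2%nat) in *.
  set (d := Y 0%nat 1%nat) in *. set (e := Y 0%nat 2%nat) in *. set (f := Y 1%nat 2%nat) in *.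
  set (x := n 0%nat). set (y := n 1%nat). set (z := n 2%nat).
  clearbody a b c d e f x y z.
  assert (Hab : a <= b) by lra. assert (Hbc : b <= c) by lra.
  assert (Hd2 : 2*d <= a) by lra. assert (Hf2 : 2*f <= b) by lra.
  assert (He2 : 2 * Rabs e <= a) by (unfold Rabs; destruct (Rcase_abs e); lra).
  assert (Hx : Rabs x * Rabs x = x * x) by (rewrite <- Rabs_mult; apply Rabs_right; nra).
  assert (Hy : Rabs y * Rabs y = y * y) by (rewrite <- Rabs_mult; apply Rabs_right; nra).
  assert (Hz : Rabs z * Rabs z = z * z) by (rewrite <- Rabs_mult; apply Rabs_right; nra).
  pose proof (Rabs_pos x). pose proof (Rabs_pos y). pose proof (Rabs_pos z). pose proof (Rabs_pos e).
  pose proof (absprod x y) as Pxy. pose proof (absprod x z) as Pxz. pose proof (absprod y z) as Pyz.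
  assert (Qd : d*(x*y) >= -(d*(Rabs x*Rabs y))) by nra.
  assert (Qf : f*(y*z) >= -(f*(Rabs y*Rabs z))) by nra.
  assert (Qe : e*(x*z) >= -(Rabs e*(Rabs x*Rabs z))).
  { pose proof (absprod e (x*z)). rewrite Rabs_mult in H3. lra. }
  destruct (Rle_dec 0 (d*(x*y))).
  { pose proof (coreA1 a b c (Rabs e) f (Rabs x) (Rabs y) (Rabs z)) as C.
    nra. }
  destruct (Rle_dec 0 (e*(x*z))).
  { pose proof (coreA2 a b c d f (Rabs x) (Rabs y) (Rabs z)) as C. nra. }
  destruct (Rle_dec 0 (f*(y*z))).
  { pose proof (coreA3 a b c d (Rabs e) (Rabs x) (Rabs y) (Rabs z)) as C. nra. }
  assert (xy0 : x*y < 0) by nra.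
  assert (yz0 : y*z < 0) by nra.
  assert (xz0 : x*z > 0) by nra.
  assert (e0 : e < 0) by nra.
  assert (Ae : Rabs e = - e) by (apply Rabs_left; lra).
  assert (Axy : Rabs x * Rabs y = - (x*y)) by (rewrite <- Rabs_mult; apply Rabs_left; lra).
  assert (Ayz : Rabs y * Rabs z = - (y*z)) by (rewrite <- Rabs_mult; apply Rabs_left; lra).
  assert (Axz : Rabs x * Rabs z = (x*z)) by (rewrite <- Rabs_mult; apply Rabs_right; lra).
  pose proof (coreB a b c d (Rabs e) f (Rabs x) (Rabs y) (Rabs z)) as C.
  nra.
Qed.
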